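(* Let $z\ge 1$ be an integer and let $n[z,1;4]$ be the order of a $[z,1;4]$-mixed cage. Then $$n[z,1;4]\le\begin{cases}3(z+1) & \text{if } z \text{ is odd},\\ 3z+2 & \text{if } z \text{ is even}.\end{cases}$$ Moreover, equality holds for $z\in\{1,2\}$, i.e. $n[1,1;4]=6$ and $n[2,1;4]=8$.
   Context: A mixed graph is a finite simple graph that may contain both edges and arcs. A $[z,r;g]$-mixed graph is a mixed graph in which every vertex is the tail of exactly $z$ arcs, the head of exactly $z$ arcs, and is incident with exactly $r$ edges, and whose girth is $g$. Walks traverse edges in either direction and arcs only in their direction; a cycle is a closed walk with no repeated vertices (other than start = end) and no repeated edge or arc; the girth is the length of a shortest cycle. A $[z,r;g]$-mixed cage is a $[z,r;g]$-mixed graph of minimum order. *)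

(* Defs.v *)
From mathcomp Require Import all_boot.
Set Implicit Arguments. Unset Strict Implicit. Unset Printing Implicit Defensive.

(* A mixed graph on the vertex set 'I_n: E is the (undirected) edge relation,
   A the arc relation (A u v : there is an arc with tail u and head v). *)
Definition mixed_graph (n : nat) (E A : rel 'I_n) : Prop :=
  [/\ irreflexive E, symmetric E, irreflexive A &
      forall u v, E u v -> ~~ A u v].

Definition zr_regular (n : nat) (E A : rel 'I_n) (z r : nat) : Prop :=
  forall u : 'I_n,
    [/\ #|[set v | A u v]| = z, #|[set v | A v u]| = z & #|[set v | E u v]| = r].

Definition link_elt (n : nat) (isarc : bool) (u v : 'I_n)
  : ('I_n * 'I_n) + {set 'I_n} :=
  if isarc then inl (u, v) else inr [set u; v].

(* A cycle of length k: distinct vertices vs_0..vs_(k-1), where step i goes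
   from vs_i to vs_(i+1 mod k) along an arc (bs_i = true, in its direction)
   or an edge (bs_i = false, either direction), and no edge/arc is used twice. *)
Definition has_cycle_of_length (n : nat) (E A : rel 'I_n) (k : nat) : Prop :=
  0 < k /\
  exists (vs : k.-tuple 'I_n) (bs : k.-tuple bool),
    [/\ uniq vs,
        forall i : 'I_k,
          if tnth bs i then A (tnth vs i) (tnth vs (ordS i))
          else E (tnth vs i) (tnth vs (ordS i))
      & uniq [seq link_elt (tnth bs i) (tnth vs i) (tnth vs (ordS i)) | i : 'I_k]].

Definition has_girth (n : nat) (E A : rel 'I_n) (g : nat) : Prop :=
  has_cycle_of_length E A g /\ forall k, k < g -> ~ has_cycle_of_length E A k.

Definition mixed_zrg_graph (n : nat) (E A : rel 'I_n) (z r g : nat) : Prop :=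
  [/\ mixed_graph E A, zr_regular E A z r & has_girth E A g].

Definition mixed_cage_order (z r g m : nat) : Prop :=
  (exists E A : rel 'I_m, mixed_zrg_graph E A z r g) /\
  forall (n : nat) (E A : rel 'I_n), mixed_zrg_graph E A z r g -> m <= n.

(* Main.v *)
Require Import Defs.
From mathcomp Require Import all_boot.
From mathcomp Require Import zify.
From Stdlib Require Import Classical.
Set Implicit Arguments. Unset Strict Implicit. Unset Printing Implicit Defensive.

Section Constr.
Variables (k e : nat).
Hypothesis He : e <= 1.
Definition KK := k.+1.
Definition mm := 3 * KK + e.
Definition NN := 2 * mm.
Definition Sd d := (0 < d < KK) || (mm < d < mm + KK) || (d == KK) || ((e == 1) && (d == mm + KK)).
Definition Td d := Sd d || (d == mm).
Definition dif (x y : nat) := if x <= y then y - x else y + NN - x.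
Definition Ec : rel 'I_NN := fun x y => ((y : nat) == x + mm) || ((x : nat) == y + mm).
Definition Ac : rel 'I_NN := fun x y => Sd (dif x y).

Lemma NN_gt0 : 0 < NN. Proof. rewrite /NN /mm /KK; lia. Qed.

Lemma Sd_m : Sd mm = false.
Proof. rewrite /Sd /mm /KK; apply/negbTE; lia. Qed.

Lemma Td_pos a : Td a -> 0 < a < NN.
Proof. rewrite /Td /Sd /NN /mm /KK; lia. Qed.

Lemma Td2 a b : Td a -> Td b -> a + b = NN -> a = mm /\ b = mm.
Proof. rewrite /Td /Sd /NN /mm /KK => Ha Hb H; lia. Qed.

Lemma TdP a : Td a -> (0 < a < KK) \/ (mm < a < mm + KK) \/ (a = KK) \/ (e = 1 /\ a = mm + KK) \/ (a = mm).
Proof.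
rewrite /Td /Sd => /orP[/orP[/orP[/orP[H|H]|/eqP H]|/andP[/eqP H1 /eqP H2]]|/eqP H].
- by left. - by right; left. - by right; right; left. - by do 3 right; left. - by do 4 right.
Qed.

Lemma Td3 a b c : Td a -> Td b -> Td c -> (a + b + c = NN) \/ (a + b + c = 2 * NN) -> False.
Proof. move: He => He0 /TdP Ha /TdP Hb /TdP Hc H.
case: Ha => [Ha|[Ha|[Ha|[Ha|Ha]]]]; case: Hb => [Hb|[Hb|[Hb|[Hb|Hb]]]]; case: Hc => [Hc|[Hc|[Hc|[Hc|Hc]]]]; unfold NN, mm, KK in *; lia. Qed.

Lemma dif_lt (x y : 'I_NN) : dif x y < NN.
Proof. have := ltn_ord x; have := ltn_ord y; rewrite /dif; case: (leqP x y) => H1 H2 H3; lia. Qed.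

Lemma dif0 (x : 'I_NN) : dif x x = 0.
Proof. by rewrite /dif leqnn subnn. Qed.

Lemma dif2 (x y : 'I_NN) : x != y -> dif x y + dif y x = NN.
Proof.
move=> /eqP Hxy; have Hv : (x : nat) <> y by move=> /val_inj.
have := ltn_ord x; have := ltn_ord y; rewrite /dif.
case: (leqP x y) => H1; case: (leqP y x) => H2 ? ?; lia.
Qed.

Lemma dif3 (x y z : 'I_NN) :
  let s := dif x y + dif y z + dif z x in [\/ s = 0, s = NN | s = 2 * NN].
Proof.
have := ltn_ord x; have := ltn_ord y; have := ltn_ord z; rewrite /dif.
case: (leqP x y) => H1; case: (leqP y z) => H2; case: (leqP z x) => H3 ? ? ? /=.
all: try (apply: Or31; lia); try (apply: Or32; lia); try (apply: Or33; lia).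
Qed.

Lemma step_T b (x y : 'I_NN) :
  (if b then Ac x y else Ec x y) -> Td (dif x y) /\ (b = false -> dif x y = mm) /\ (b -> Sd (dif x y)).
Proof.
case: b => /=.
  by move=> H; split; [rewrite /Td; apply/orP; left | split].
have := ltn_ord x; have := ltn_ord y.
move=> Hy Hx H; have Hd : dif x y = mm.
  have HN : NN = 2 * mm by [].
  by move: H => /orP[] /eqP Hxy; rewrite /dif; case: (leqP x y) => ? ; lia.
by rewrite /Td Hd eqxx orbT.
Qed.


Lemma sum_const_on a b c (F : nat -> nat) :
  (forall i, a <= i < b -> F i = c) -> \sum_(a <= i < b) F i = (b - a) * c.
Proof. by move=> H; rewrite (eq_big_nat _ _ H) sum_nat_const_nat. Qed.

Lemma card_S : #|[set d : 'I_NN | Sd d]| = 2 * KK - 1 + e.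
Proof.
have -> : #|[set d : 'I_NN | Sd d]| = \sum_(d < NN) (Sd d : nat).
  by rewrite -sum1_card big_mkcond; apply: eq_bigr => i _; rewrite inE; case: (Sd i).
rewrite -(big_mkord xpredT (fun d => (Sd d : nat))).
have HN : NN = 2 * mm by [].
have Hm : mm = 3 * KK + e by [].
have HK : 0 < KK by [].
rewrite (big_cat_nat _ (m := 0) (n := 1) (p := NN)); [|lia|lia].
rewrite big_nat1 /=.
rewrite (big_cat_nat _ (m := 1) (n := KK) (p := NN)); [|lia|lia].
rewrite (big_cat_nat _ (m := KK) (n := KK.+1) (p := NN)); [|lia|lia].
rewrite big_nat1.
rewrite (big_cat_nat _ (m := KK.+1) (n := mm.+1) (p := NN)); [|lia|lia].
rewrite (big_cat_nat _ (m := mm.+1) (n := mm + KK) (p := NN)); [|lia|lia].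
rewrite (big_cat_nat _ (m := mm + KK) (n := (mm + KK).+1) (p := NN)); [|lia|lia].
rewrite big_nat1.
rewrite (@sum_const_on 1 KK 1); last first.
  by move=> i Hi; have -> : Sd i by rewrite /Sd; lia.
rewrite (@sum_const_on KK.+1 mm.+1 0); last first.
  move=> i Hi; have : ~~ Sd i by rewrite /Sd; move: He; lia.
  by move/negbTE=> ->.
rewrite (@sum_const_on mm.+1 (mm + KK) 1); last first.
  by move=> i Hi; have -> : Sd i by rewrite /Sd; lia.
rewrite (@sum_const_on (mm + KK).+1 NN 0); last first.
  move=> i Hi; have : ~~ Sd i by rewrite /Sd; move: He; lia.
  by move/negbTE=> ->.
have -> : Sd 0 = false by rewrite /Sd; apply/negbTE; lia.
have -> : Sd KK by rewrite /Sd eqxx !orbT.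
have -> : Sd (mm + KK) = (e == 1).
  rewrite /Sd; case: (e == 1); rewrite ?eqxx ?orbT //.
  apply/negbTE; lia.
rewrite /=; move: He; case: (e) => [|[|]] //= _; lia.
Qed.

Lemma dif_inj1 (u : 'I_NN) : injective (fun v : 'I_NN => Ordinal (@dif_lt u v)).
Proof.
move=> v w /(congr1 val) /=; have := ltn_ord v; have := ltn_ord w; have := ltn_ord u.
rewrite /dif => ? ? ?; case: (leqP u v) => ?; case: (leqP u w) => ? ? ; apply: val_inj => /=; lia.
Qed.

Lemma dif_inj2 (u : 'I_NN) : injective (fun v : 'I_NN => Ordinal (@dif_lt v u)).
Proof.
move=> v w /(congr1 val) /=; have := ltn_ord v; have := ltn_ord w; have := ltn_ord u.
rewrite /dif => ? ? ?; case: (leqP v u) => ?; case: (leqP w u) => ? ? ; apply: val_inj => /=; lia.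
Qed.

Lemma out_deg (u : 'I_NN) : #|[set v | Ac u v]| = 2 * KK - 1 + e.
Proof.
rewrite -card_S -[RHS](card_preimset _ (@dif_inj1 u)).
by apply: eq_card => v; rewrite !inE.
Qed.

Lemma in_deg (u : 'I_NN) : #|[set v | Ac v u]| = 2 * KK - 1 + e.
Proof.
rewrite -card_S -[RHS](card_preimset _ (@dif_inj2 u)).
by apply: eq_card => v; rewrite !inE.
Qed.

Lemma partner_lt (u : 'I_NN) : (if u < mm then u + mm else u - mm) < NN.
Proof. have := ltn_ord u; have HN : NN = 2 * mm by []; case: ifP => ? ?; lia. Qed.

Lemma edge_deg (u : 'I_NN) : #|[set v | Ec u v]| = 1.
Proof.
apply/eqP/cards1P; exists (Ordinal (@partner_lt u)); apply/setP => v; rewrite !inE.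
have HN : NN = 2 * mm by [].
have := ltn_ord u; have := ltn_ord v => ? ?.
apply/idP/eqP => [/orP[] /eqP H|/(congr1 val) /= H]; first (apply: val_inj => /=; case: ifP => ?; lia).
  apply: val_inj => /=; case: ifP => ?; lia.
apply/orP; move: H; case: ifP => ? ?; [left|right]; apply/eqP; lia.
Qed.

Lemma constr_mixed : mixed_graph Ec Ac.
Proof.
split.
- move=> x; rewrite /Ec; apply/negbTE; have : 0 < mm by rewrite /mm /KK; lia. lia.
- by move=> x y; rewrite /Ec orbC.
- by move=> x; rewrite /Ac dif0 /Sd /mm /KK; apply/negbTE; lia.
- move=> u v H; have [_ [H2 _]] := @step_T false u v H; by rewrite /Ac H2 // Sd_m.
Qed.

Lemma constr_reg : zr_regular Ec Ac (2 * KK - 1 + e) 1.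
Proof. by move=> u; split; [exact: out_deg|exact: in_deg|exact: edge_deg]. Qed.

End Constr.


Section Gen.
Variables (n : nat) (E A : rel 'I_n).

Definition stp (b : bool) (x y : 'I_n) := if b then A x y else E x y.

Lemma cyc1_none : irreflexive E -> irreflexive A -> ~ has_cycle_of_length E A 1.
Proof.
move=> iE iA [_ [vs [bs [_ H _]]]].
have := H ord0; have -> : ordS (ord0 : 'I_1) = ord0 by apply: val_inj.
by case: (tnth bs ord0); rewrite ?iE ?iA.
Qed.

Lemma cyc2_ext : has_cycle_of_length E A 2 ->
  exists x0 x1 b0 b1, [/\ stp b0 x0 x1, stp b1 x1 x0 & (b0 || b1)].
Proof.
move=> [_ [vs [bs [_ H U]]]].
pose i0 : 'I_2 := Ordinal (isT : 0 < 2); pose i1 : 'I_2 := Ordinal (isT : 1 < 2).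
have S0 : ordS i0 = i1 by apply: val_inj.
have S1 : ordS i1 = i0 by apply: val_inj.
have En : enum 'I_2 = [:: i0; i1] by apply: (inj_map val_inj); rewrite val_enum_ord.
exists (tnth vs i0), (tnth vs i1), (tnth bs i0), (tnth bs i1); split.
- by have := H i0; rewrite S0.
- by have := H i1; rewrite S1.
have En2 : enum_mem (mem (predT : pred (ordinal 2))) = [:: i0; i1] by exact: En.
move: U; rewrite /image_mem En2 /= S0 S1 /link_elt.
case: (tnth bs i0); case: (tnth bs i1) => //=.
by rewrite setUC inE eqxx.
Qed.

Lemma cyc3_ext : has_cycle_of_length E A 3 ->
  exists x0 x1 x2 b0 b1 b2, [/\ stp b0 x0 x1, stp b1 x1 x2 & stp b2 x2 x0].
Proof.
move=> [_ [vs [bs [_ H U]]]].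
pose i0 : 'I_3 := Ordinal (isT : 0 < 3); pose i1 : 'I_3 := Ordinal (isT : 1 < 3).
pose i2 : 'I_3 := Ordinal (isT : 2 < 3).
have S0 : ordS i0 = i1 by apply: val_inj.
have S1 : ordS i1 = i2 by apply: val_inj.
have S2 : ordS i2 = i0 by apply: val_inj.
exists (tnth vs i0), (tnth vs i1), (tnth vs i2), (tnth bs i0), (tnth bs i1), (tnth bs i2); split.
- by have := H i0; rewrite S0.
- by have := H i1; rewrite S1.
- by have := H i2; rewrite S2.
Qed.


Lemma links_uniq k (vs : k.-tuple 'I_n) (bs : k.-tuple bool) :
  uniq vs -> (forall i j, tnth bs i = false -> tnth bs j = false -> i = j) ->
  uniq [seq link_elt (tnth bs i) (tnth vs i) (tnth vs (ordS i)) | i : 'I_k].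
Proof.
move=> /tuple_uniqP Hv Hb; rewrite /image_mem map_inj_uniq ?enum_uniq //.
move=> i j; rewrite /link_elt.
case Bi: (tnth bs i); case Bj: (tnth bs j) => //.
- by case=> /Hv.
- by move=> _; apply: Hb.
Qed.

Lemma mk_cycle k (vs : k.-tuple 'I_n) (bs : k.-tuple bool) : 0 < k ->
  uniq vs -> (forall i j, tnth bs i = false -> tnth bs j = false -> i = j) ->
  (forall i : 'I_k, stp (tnth bs i) (tnth vs i) (tnth vs (ordS i))) ->
  has_cycle_of_length E A k.
Proof.
move=> Hk Hu Hb Hs; split=> //; exists vs, bs; split=> //; last exact: links_uniq.
Qed.

Lemma mk_digon x y : x != y -> A x y -> A y x -> has_cycle_of_length E A 2.
Proof.
move=> Hxy H1 H2; apply: (@mk_cycle 2 [tuple x; y] [tuple true; true]) => //.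
- by rewrite /= inE Hxy.
- by move=> [[|[|?]] ?] [[|[|?]] ?].
- by move=> [[|[|?]] Hi].
Qed.

Lemma mk_tri x y z b0 b1 b2 : uniq [:: x; y; z] -> (b0 || b1) && (b1 || b2) && (b0 || b2) ->
  stp b0 x y -> stp b1 y z -> stp b2 z x -> has_cycle_of_length E A 3.
Proof.
move=> Hu Hb H0 H1 H2.
have HB : forall i j : 'I_3, tnth [tuple b0; b1; b2] i = false -> tnth [tuple b0; b1; b2] j = false -> i = j.
{ clear H0 H1 H2; move=> [[|[|[|?]]] ?] [[|[|[|?]]] ?] //; rewrite !(tnth_nth false) /=.
  all: move: Hb; case: b0; case: b1; case: b2 => //.
  all: by move=> *; apply: val_inj. }
have HS : forall i : 'I_3, stp (tnth [tuple b0; b1; b2] i) (tnth [tuple x; y; z] i) (tnth [tuple x; y; z] (ordS i)).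
  by move=> [[|[|[|?]]] Hi] //; rewrite !(tnth_nth false) !(tnth_nth x) /=.
exact: (@mk_cycle 3 [tuple x; y; z] [tuple b0; b1; b2]).
Qed.

End Gen.


Section Girth.
Variables (k e : nat).
Hypothesis He : e <= 1.

Lemma constr_no2 : ~ has_cycle_of_length (@Ec k e) (@Ac k e) 2.
Proof.
move=> /cyc2_ext [x0 [x1 [b0 [b1 [H0 H1 Hb]]]]].
have [T0 [F0 S0]] := step_T He H0; have [T1 [F1 S1]] := step_T He H1.
have Hne : x0 != x1.
  by apply/eqP=> Ex; move: T0; rewrite Ex dif0 => /(Td_pos He).
have [Ha Hb'] := Td2 He T0 T1 (dif2 He Hne).
move: Hb S0 S1; rewrite Ha Hb' (Sd_m k He).
clear H0 H1 F0 F1; case: b0; case: b1 => //= _.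
- by move=> /(_ isT).
- by move=> /(_ isT).
- by move=> _ /(_ isT).
Qed.

Lemma constr_no3 : ~ has_cycle_of_length (@Ec k e) (@Ac k e) 3.
Proof.
move=> /cyc3_ext [x0 [x1 [x2 [b0 [b1 [b2 [H0 H1 H2]]]]]]].
have [T0 _] := step_T He H0; have [T1 _] := step_T He H1; have [T2 _] := step_T He H2.
case: (dif3 He x0 x1 x2) => /= Hs.
- by move: (Td_pos He T0); lia.
- by apply: (Td3 He T0 T1 T2); left.
- by apply: (Td3 He T0 T1 T2); right.
Qed.


Lemma fv_lt (i : 'I_4) : i * KK k < NN k e.
Proof. have := ltn_ord i; rewrite /NN /mm /KK; nia. Qed.

Definition fv (i : 'I_4) : 'I_(NN k e) := Ordinal (fv_lt i).

Lemma difE1 (a b : nat) : a <= b -> dif k e a b = b - a.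
Proof. by rewrite /dif => ->. Qed.
Lemma difE2 (a b : nat) : b < a -> dif k e a b = b + NN k e - a.
Proof. by move=> H; rewrite /dif leqNgt H. Qed.

Lemma constr_4 : has_cycle_of_length (@Ec k e) (@Ac k e) 4.
Proof.
apply: (@mk_cycle _ _ _ 4 [tuple fv i | i < 4] [tuple (i < 3) || (e == 1) | i < 4]) => //.
- rewrite map_inj_uniq ?enum_uniq //.
  move=> i j /(congr1 val) /= Hij; have := ltn_ord i; have := ltn_ord j => Hi Hj.
  by apply: val_inj; move/eqP: Hij; rewrite eqn_pmul2r // => /eqP.
- move=> i j; rewrite !tnth_mktuple; have := ltn_ord i; have := ltn_ord j.
  case: (e == 1); rewrite ?orbT ?orbF // => Hi Hj /negbT Hi3 /negbT Hj3; apply: ord_inj; lia.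
- have HN : NN k e = 2 * mm k e by [].
  have Hm : mm k e = 3 * KK k + e by [].
  have HK : 0 < KK k by [].
  move=> [[|[|[|[|j]]]] Hj] //; rewrite !tnth_mktuple /stp /=.
  + rewrite /Ac difE1 /=; last by lia.
    by rewrite /Sd; lia.
  + rewrite /Ac difE1 /=; last by lia.
    by rewrite /Sd; lia.
  + rewrite /Ac difE1 /=; last by lia.
    by rewrite /Sd; lia.
  + have -> : ordS (Ordinal Hj) = ord0 by apply: val_inj.
    have V3 : (fv (Ordinal Hj) : nat) = 3 * KK k by [].
    have V0 : (fv ord0 : nat) = 0 by rewrite /= mul0n.
    have [He1|He0] : e = 1 \/ e = 0 by lia.
    * have -> : e == 1 by apply/eqP.
      rewrite /Ac difE2 V0 V3; last by lia.
      rewrite /Sd; lia.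
    * have -> : (e == 1) = false by rewrite He0.
      rewrite /Ec V0 V3; lia.
Qed.

Lemma constr_graph : mixed_zrg_graph (@Ec k e) (@Ac k e) (2 * KK k - 1 + e) 1 4.
Proof.
split; [exact: constr_mixed | exact: constr_reg |].
split; first exact: constr_4.
move=> [|[|[|[|?]]]] // _.
- by case.
- by apply: cyc1_none; [case: (constr_mixed k He) | case: (constr_mixed k He)].
- exact: constr_no2.
- exact: constr_no3.
Qed.

End Girth.


Lemma even_matching n (E : rel 'I_n) : symmetric E -> irreflexive E ->
  (forall u, #|[set v | E u v]| = 1) -> ~~ odd n.
Proof.
move=> Hs Hi Hd.
have H1 : \sum_(u < n) \sum_(v < n) (E u v : nat) = n.
  rewrite (eq_bigr (fun _ => 1)).
    by rewrite sum_nat_const card_ord muln1.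
  move=> u _; rewrite -(Hd u) -sum1_card [RHS]big_mkcond /=.
  by apply: eq_bigr => v _; rewrite inE; case: (E u v).
have H2 : \sum_(u < n) \sum_(v < n) (E u v : nat) =
  \sum_(u < n) \sum_(v < n) ((E u v && (u < v)) : nat) +
  \sum_(u < n) \sum_(v < n) ((E u v && (v < u)) : nat).
  rewrite -big_split; apply: eq_bigr => u _; rewrite -big_split; apply: eq_bigr => v _ /=.
  case Huv: (E u v) => //=.
  case: (ltngtP u v) => // /ord_inj H; by rewrite H Hi in Huv.
have H3 : \sum_(u < n) \sum_(v < n) ((E u v && (v < u)) : nat) =
  \sum_(u < n) \sum_(v < n) ((E u v && (u < v)) : nat).
  rewrite exchange_big; apply: eq_bigr => u _; apply: eq_bigr => v _.
  by rewrite Hs.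
by rewrite -H1 H2 H3 addnn odd_double.
Qed.

Section Lower.
Variables (n z : nat) (E A : rel 'I_n).
Hypothesis Hmix : mixed_graph E A.
Hypothesis Hreg : zr_regular E A z 1.
Hypothesis Hno2 : ~ has_cycle_of_length E A 2.
Hypothesis Hno3 : ~ has_cycle_of_length E A 3.

Lemma iE : irreflexive E. Proof. by case: Hmix. Qed.
Lemma sE : symmetric E. Proof. by case: Hmix. Qed.
Lemma iA : irreflexive A. Proof. by case: Hmix. Qed.
Lemma EnA u v : E u v -> ~~ A u v. Proof. by case: Hmix => _ _ _; apply. Qed.

Lemma A_neq u v : A u v -> u != v.
Proof. by apply: contraTneq => ->; rewrite iA. Qed.
Lemma E_neq u v : E u v -> u != v.
Proof. by apply: contraTneq => ->; rewrite iE. Qed.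

Lemma no_digon u v : A u v -> A v u -> False.
Proof. move=> H1 H2; apply: Hno2; exact: (@mk_digon _ E A u v (A_neq H1) H1 H2). Qed.

Lemma partner v : exists w, E v w.
Proof.
have [_ _ /eqP/cards1P [w Hw]] := Hreg v.
exists w; have : w \in [set x | E v x] by rewrite Hw inE.
by rewrite inE.
Qed.

Lemma n_even : ~~ odd n.
Proof. apply: even_matching; [exact: sE | exact: iE | by move=> u; case: (Hreg u)]. Qed.

Lemma tri_arc_edge w i v : E v w -> A w i -> A i v -> False.
Proof.
move=> Hvw Hwi Hiv; apply: Hno3.
apply: (@mk_tri _ E A w i v true true false) => //.
rewrite /= !inE negb_or (A_neq Hwi) (A_neq Hiv) /= andbT eq_sym.
exact: E_neq.
Qed.

Lemma tri_arcs x y u : A x y -> A y u -> A u x -> False.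
Proof.
move=> H1 H2 H3; apply: Hno3.
apply: (@mk_tri _ E A x y u true true true) => //.
by rewrite /= !inE negb_or (A_neq H1) (A_neq H2) /= andbT eq_sym (A_neq H3).
Qed.

End Lower.

Lemma seq_card n (s : seq 'I_n) : uniq s -> size s <= n.
Proof. by move/card_uniqP <-; rewrite -[X in _ <= X]card_ord max_card. Qed.

Lemma set1_mem (T : finType) (S : {set T}) (x y : T) : S = [set y] -> x \in S -> x = y.
Proof. by move=> -> /set1P. Qed.

Section Z1.
Variables (n : nat) (E A : rel 'I_n).
Hypothesis Hmix : mixed_graph E A.
Hypothesis Hreg : zr_regular E A 1 1.
Hypothesis Hno2 : ~ has_cycle_of_length E A 2.
Hypothesis Hno3 : ~ has_cycle_of_length E A 3.

Lemma lower1 (v : 'I_n) : 6 <= n.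
Proof.
have [w Hvw] := partner Hreg v.
have Hwv : E w v by rewrite (sE Hmix).
have [/eqP/cards1P [o Ho] /eqP/cards1P [i Hi] _] := Hreg v.
have [/eqP/cards1P [o' Ho'] _ _] := Hreg w.
have Avo : A v o by move: (set11 o); rewrite -Ho inE.
have Aiv : A i v by move: (set11 i); rewrite -Hi inE.
have Awo' : A w o' by move: (set11 o'); rewrite -Ho' inE.
have U : uniq [:: v; w; o; i; o'].
  rewrite /= !inE !negb_or.
  have -> : v != w by exact: (E_neq Hmix Hvw).
  have -> : v != o by exact: (A_neq Hmix Avo).
  have -> : v != i by rewrite eq_sym; exact: (A_neq Hmix Aiv).
  have -> : v != o' by apply: contraTneq Awo' => <-; exact: (EnA Hmix Hwv).
  have -> : w != o by apply: contraTneq Avo => <-; exact: (EnA Hmix Hvw).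
  have -> : w != i by apply: contraTneq Aiv => <-; exact: (EnA Hmix Hwv).
  have -> : w != o' by exact: (A_neq Hmix Awo').
  have -> : o != i by apply: contraTneq Aiv => <-; apply/negP => Aov; exact: (no_digon Hmix Hno2 Avo Aov).
  have -> : o != o'.
    apply: contraTneq Awo' => <-; apply/negP => Awo.
    have [_ /eqP/cards1P [y Hy] _] := Hreg o.
    have := set1_mem (x := v) Hy; rewrite inE => /(_ Avo) Ev.
    have := set1_mem (x := w) Hy; rewrite inE => /(_ Awo) Ew.
    by move: (E_neq Hmix Hvw); rewrite Ev Ew eqxx.
  have -> : i != o' by apply: contraTneq Awo' => <-; apply/negP => Awi; exact: (tri_arc_edge Hmix Hno3 Hvw Awi Aiv).
  done.
have := seq_card U; have := n_even Hmix Hreg => /= He H5.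
by case: n He H5 => [|[|[|[|[|[|]]]]]].
Qed.

End Z1.

Section Z2.
Variables (n : nat) (E A : rel 'I_n).
Hypothesis Hmix : mixed_graph E A.
Hypothesis Hreg : zr_regular E A 2 1.
Hypothesis Hno2 : ~ has_cycle_of_length E A 2.
Hypothesis Hno3 : ~ has_cycle_of_length E A 3.

Lemma lower2 (v : 'I_n) : 8 <= n.
Proof.
have [w Hvw] := partner Hreg v.
have Hwv : E w v by rewrite (sE Hmix).
have [/eqP/cards2P [o1 [o2 [Ho12 Ho]]] /eqP/cards2P [i1 [i2 [Hi12 Hi]]] _] := Hreg v.
have Ao1 : A v o1 by move: (set21 o1 o2); rewrite -Ho inE.
have Ao2 : A v o2 by move: (set22 o1 o2); rewrite -Ho inE.
have Ai1 : A i1 v by move: (set21 i1 i2); rewrite -Hi inE.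
have Ai2 : A i2 v by move: (set22 i1 i2); rewrite -Hi inE.
have Dvw : v != w by exact: (E_neq Hmix Hvw).
have Dvo x : A v x -> v != x by exact: (A_neq Hmix).
have Dvi x : A x v -> v != x by move=> H; rewrite eq_sym; exact: (A_neq Hmix H).
have Dwo x : A v x -> w != x by move=> H; apply: contraTneq H => <-; exact: (EnA Hmix Hvw).
have Dwi x : A x v -> w != x by move=> H; apply: contraTneq H => <-; exact: (EnA Hmix Hwv).
have Doi x y : A v x -> A y v -> x != y.
  by move=> H1 H2; apply: contraTneq H2 => <-; apply/negP => H3; exact: (no_digon Hmix Hno2 H1 H3).
pose X := [:: v; w; o1; o2; i1; i2].
have UX : uniq X.
  rewrite /X /= !inE !negb_or Dvw (Dvo _ Ao1) (Dvo _ Ao2) (Dvi _ Ai1) (Dvi _ Ai2).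
  rewrite (Dwo _ Ao1) (Dwo _ Ao2) (Dwi _ Ai1) (Dwi _ Ai2) Ho12 Hi12.
  by rewrite (Doi _ _ Ao1 Ai1) (Doi _ _ Ao1 Ai2) (Doi _ _ Ao2 Ai1) (Doi _ _ Ao2 Ai2).
have [y Hy] : exists y, y \notin X.
  apply/existsP; apply: contraT; rewrite negb_exists => /forallP Hall.
  have InX x : x \in X by move: (Hall x); rewrite negbK.
  have Sub : [set x | A w x] \subset [set x | A v x].
    apply/subsetP => x; rewrite !inE => Awx.
    move: (InX x); rewrite /X !inE => /orP[/eqP Ex|/orP[/eqP Ex|/orP[/eqP Ex|/orP[/eqP Ex|/orP[/eqP Ex|/eqP Ex]]]]].
    - by move: Awx; rewrite Ex (negbTE (EnA Hmix Hwv)).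
    - by move: Awx; rewrite Ex (iA Hmix).
    - by rewrite Ex.
    - by rewrite Ex.
    - by exfalso; rewrite Ex in Awx; exact: (tri_arc_edge Hmix Hno3 Hvw Awx Ai1).
    - by exfalso; rewrite Ex in Awx; exact: (tri_arc_edge Hmix Hno3 Hvw Awx Ai2).
  have EqS : [set x | A w x] = [set x | A v x].
    apply/eqP; rewrite eqEcard Sub /=.
    by have [-> _ _] := Hreg v; have [-> _ _] := Hreg w.
  have Awo1 : A w o1 by move: (set21 o1 o2); rewrite -Ho -EqS inE.
  have Awo2 : A w o2 by move: (set22 o1 o2); rewrite -Ho -EqS inE.
  have [Hout _ _] := Hreg o1.
  have /card_gt0P [x] : 0 < #|[set x | A o1 x]| by rewrite Hout.
  rewrite inE => Ax.
  move: (InX x); rewrite /X !inE => /orP[/eqP Ex|/orP[/eqP Ex|/orP[/eqP Ex|/orP[/eqP Ex|/orP[/eqP Ex|/eqP Ex]]]]].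
  - by rewrite Ex in Ax; exfalso; exact: (no_digon Hmix Hno2 Ao1 Ax).
  - by rewrite Ex in Ax; exfalso; exact: (no_digon Hmix Hno2 Awo1 Ax).
  - by rewrite Ex (iA Hmix) in Ax.
  - rewrite Ex in Ax; have [_ Hin _] := Hreg o2.
    have U3 : uniq [:: v; w; o1] by rewrite /= !inE negb_or Dvw (Dvo _ Ao1) (Dwo _ Ao1).
    have : size [:: v; w; o1] <= #|[set x | A x o2]|.
      rewrite -(card_uniqP U3); apply: subset_leq_card; apply/subsetP => u.
      by rewrite !inE => /or3P [/eqP ->|/eqP ->|/eqP ->].
    by rewrite Hin.
  - by rewrite Ex in Ax; exfalso; exact: (tri_arcs Hmix Hno3 Ao1 Ax Ai1).
  - by rewrite Ex in Ax; exfalso; exact: (tri_arcs Hmix Hno3 Ao1 Ax Ai2).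
have U7 : uniq (y :: X) by rewrite cons_uniq Hy UX.
have := seq_card U7; have := n_even Hmix Hreg => /= He H7.
by case: n He H7 => [|[|[|[|[|[|[|[|]]]]]]]].
Qed.

End Z2.


Lemma min_exists (P : nat -> Prop) n : P n -> exists m, P m /\ forall k, P k -> m <= k.
Proof.
elim/ltn_ind: n => n IH Pn.
case: (classic (exists k, k < n /\ P k)) => [[k [Hk Pk]]|H].
- exact: (IH k Hk Pk).
- exists n; split=> // k Pk; case: (leqP n k) => // Hkn.
  by exfalso; apply: H; exists k.
Qed.


Lemma vertex_of n (E A : rel 'I_n) z : mixed_zrg_graph E A z 1 4 -> exists v : 'I_n, True.
Proof. by move=> [_ _ [[_ [vs _]] _]]; exists (tnth vs ord0). Qed.

Theorem theorem9 :
  (forall z : nat, 1 <= z ->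
     exists m : nat, mixed_cage_order z 1 4 m /\
       m <= (if odd z then 3 * (z + 1) else 3 * z + 2)) /\
  mixed_cage_order 1 1 4 6 /\ mixed_cage_order 2 1 4 8.
Proof.
split; [|split].
- move=> z Hz.
  have Hz2 := odd_double_half z; rewrite -muln2 in Hz2.
  have [k [e [He Hz' Hb]]] : exists k e, [/\ e <= 1, z = 2 * KK k - 1 + e &
      NN k e <= (if odd z then 3 * (z + 1) else 3 * z + 2)].
    case Ho : (odd z) Hz2 => /= Hz2.
    + by exists (z./2), 0; split; unfold NN, mm, KK; lia.
    + by exists (z./2).-1, 1; split; unfold NN, mm, KK; lia.
  have G := constr_graph k He; rewrite -Hz' in G.
  have PN : exists E A : rel 'I_(NN k e), mixed_zrg_graph E A z 1 4 by exists (@Ec k e), (@Ac k e).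
  have [m [Pm Hmin]] := @min_exists (fun n => exists E A : rel 'I_n, mixed_zrg_graph E A z 1 4) _ PN.
  exists m; split.
  + split=> // N E A H; apply: Hmin; by exists E, A.
  + apply: leq_trans Hb; apply: Hmin; by exists (@Ec k e), (@Ac k e).
- split; first by exists (@Ec 0 0), (@Ac 0 0); exact: (constr_graph 0 (isT : 0 <= 1)).
  move=> N E A H; have [v _] := vertex_of H.
  case: H => Hm Hr [_ Hg].
  exact: (lower1 Hm Hr (Hg 2 isT) (Hg 3 isT) v).
- split; first by exists (@Ec 0 1), (@Ac 0 1); exact: (constr_graph 0 (isT : 1 <= 1)).
  move=> N E A H; have [v _] := vertex_of H.
  case: H => Hm Hr [_ Hg].
  exact: (lower2 Hm Hr (Hg 2 isT) (Hg 3 isT) v).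
Qed.
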